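(* Consider $u_t+\beta u_x=g$ with constant $\beta>0$ and periodic boundary conditions, and an explicit $s$-stage Runge–Kutta method with coefficients $c_{\ell\kappa},d_{\ell\kappa}$ ($0\le\kappa\le\ell\le s-1$, $\sum_{\kappa}c_{\ell\kappa}=1$). Given $u_h^{n,0}=u_h^n\in\mathbb V^k$, time step $\tau$ and source functions $g^{n,\kappa}\in L^2(\Omega)$, the RKSV stages $u_h^{n,\ell+1}\in\mathbb V^k$ are defined by $$(u_h^{n,\ell+1},\omega^* )=\sum_{0\le\kappa\le\ell}\Big(c_{\ell\kappa}(u_h^{n,\kappa},\omega^* )+\tau d_{\ell\kappa}\Big(\sum_i\sum_{j=0}^k\omega^*_{i,j}\big(\hat f^{n,\kappa}_{i,j}-\hat f^{n,\kappa}_{i,j+1}\big)+(g^{n,\kappa},\omega^* )\Big)\Big)\quad\forall\omega^*\in\mathbb V^{k,*},$$ with upwind fluxes $\hat f^{n,\kappa}_{i,j}=\beta u_h^{n,\kappa}(x_{i,j})$ for $1\le j\le k$, $\hat f^{n,\kappa}_{i,0}=\beta u_h^{n,\kappa}(x_{i-\frac12}^-)$, $\hat f^{n,\kappa}_{i,k+1}=\beta u_h^{n,\kappa}(x_{i+\frac12}^-)$, and $u_h^{n+1}=u_h^{n,s}$. Under Assumption (S), these relations are equivalent to: for all $\omega\in\mathbb V^k$ and $\ell=0,\dots,s-1$, $$(u_h^{n,\ell+1},\omega)_*=\sum_{0\le\kappa\le\ell}\Big(c_{\ell\kappa}(u_h^{n,\kappa},\omega)_*+\tau d_{\ell\kappa}\big(\mathcal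 H^*(u_h^{n,\kappa},\omega)+(g^{n,\kappa},M^*\omega)\big)\Big).$$
   Context: Let $\Omega=[a,b]$ be partitioned into finitely many cells $I_i=[x_{i-\frac12},x_{i+\frac12}]$ with sizes $h_i$; indices are periodic (the point $x_{\frac12}$ is identified with the last interface). $(\cdot,\cdot)$ is the $L^2(\Omega)$ inner product, $(\cdot,\cdot)_{I_i}$ the $L^2(I_i)$ one. $\mathbb V^k=\{v\in L^2(\Omega): v|_{I_i}\in\mathbb P^k(I_i)\ \forall i\}$. Each $I_i$ has subdivision points $x_{i-\frac12}=x_{i,0}<x_{i,1}<\dots<x_{i,k}<x_{i,k+1}=x_{i+\frac12}$, control volumes $I_{i,j}=[x_{i,j},x_{i,j+1}]$, $j=0,\dots,k$; $\mathbb V^{k,*}$ is the space of functions constant on each $I_{i,j}$, $\omega^*_{i,j}$ the value of $\omega^*$ on $I_{i,j}$. On each $I_i$ a quadrature $Q_i^k(v)=\sum_{j=0}^{k+1}A_{i,j}v(x_{i,j})$ is given, error $R_i^k(v)=\int_{I_i}v\,dx-Q_i^k(v)$, exact on $\mathbb P^{k-1}(I_i)$; for piecewise functions, $Q_i^k$ uses the restriction to $I_i$ (endpoint values are limits from inside $I_i$). $M^*:\mathbb V^k\to\mathbb V^{k,*}$: for $v=\omega|_{I_i}$, $(M^*\omega)|_{I_{i,0}}=v(x_{i-\frac12})+A_{i,0}v'(x_{i-\frac12})$ and $(M^*\omega)|_{I_{i,j}}-(M^*\omega)|_{I_{i,j-1}}=A_{i,j}v'(x_{i,j})$, $j=1,\dots,k$.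 $L_{i,\ell}$ is the shifted Legendre polynomial of degree $\ell$ on $I_i$ with $L_{i,\ell}(x_{i+\frac12})=1$, $(L_{i,\ell},L_{i,m})_{I_i}=\delta_{\ell m}h_i/(2\ell+1)$. Assumption (S): $k\ge1$ and for every $i$, (1) $R_i^k(v)=0$ for all $v\in\mathbb P^{2k-1}(I_i)$, (2) $\frac{h_i}{2k-1}-Q_i^k(L_{i,k+1}L_{i,k-1})>0$; then $(v,\omega)_*:=(v,M^*\omega)$ is an inner product on $\mathbb V^k$. Jumps: $[\![v]\!]_{i+\frac12}=v(x_{i+\frac12}^+)-v(x_{i+\frac12}^-)$. For $\omega\in\mathbb V^k$ and piecewise smooth $v$: $\mathcal H^*(v,\omega)=\beta\Big(\sum_iQ_i^k(v\omega_x)+\sum_iv(x_{i+\frac12}^-)[\![\omega]\!]_{i+\frac12}-\sum_iA_{i,0}\,\omega_x(x_{i-\frac12}^+)[\![v]\!]_{i-\frac12}\Big)$. *)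

(* Defs.v *)
From HB Require Import structures.
From mathcomp Require Import all_boot all_order all_algebra.
From mathcomp Require Import all_classical all_reals all_analysis.
Set Implicit Arguments. Unset Strict Implicit. Unset Printing Implicit Defensive.
Import Order.TTheory GRing.Theory Num.Theory.
Import numFieldNormedType.Exports.
Local Open Scope classical_set_scope.
Local Open Scope ring_scope.

(* The mesh has N cells I_i, i = 0..N-1 (nat indices, periodic).
   xs i j = x_{i,j} for j = 0..k+1, with xs i 0 = x_{i-1/2}, xs i (k+1) = x_{i+1/2}.
   A piecewise function v in V^k is a family of polynomials v : nat -> {poly R},
   v i being the restriction of v to I_i (only i < N matters).
   A function of V^{k,*} is ws : nat -> nat -> R, ws i j = value on I_{i,j}
   (only i < N, j <= k matter). *)

Section Defs.
Variable R : realType.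

Definition prevc (N i : nat) : nat := if i == 0%N then N.-1 else i.-1.
Definition nextc (N i : nat) : nat := if i.+1 == N then 0%N else i.+1.

Definition integ (a b : R) (f : R -> R) : R :=
  \int[lebesgue_measure]_(x in `[a, b]) f x.

Definition mesh (N k : nat) (xs : nat -> nat -> R) : Prop :=
  (0 < N)%N /\
  (forall i j, (i < N)%N -> (j <= k)%N -> xs i j < xs i j.+1) /\
  (forall i, (i.+1 < N)%N -> xs i k.+1 = xs i.+1 0%N).

Definition a_of (xs : nat -> nat -> R) : R := xs 0%N 0%N.
Definition b_of (N k : nat) (xs : nat -> nat -> R) : R := xs N.-1 k.+1.
Definition hcell (k : nat) (xs : nat -> nat -> R) (i : nat) : R := xs i k.+1 - xs i 0%N.

Definition inVk (N k : nat) (v : nat -> {poly R}) : Prop :=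
  forall i, (i < N)%N -> (size (v i) <= k.+1)%N.

Definition Qi (k : nat) (xs A : nat -> nat -> R) (i : nat) (p : {poly R}) : R :=
  \sum_(j < k.+2) A i j * p.[xs i j].

Definition pairStar (N k : nat) (xs : nat -> nat -> R) (f : nat -> R -> R)
  (ws : nat -> nat -> R) : R :=
  \sum_(i < N) \sum_(j < k.+1) ws i j * integ (xs i j) (xs i j.+1) (f i).

Definition l2Vk (N k : nat) (xs : nat -> nat -> R) (v : nat -> {poly R})
  (ws : nat -> nat -> R) : R :=
  pairStar N k xs (fun i x => (v i).[x]) ws.

Definition l2g (N k : nat) (xs : nat -> nat -> R) (g : R -> R)
  (ws : nat -> nat -> R) : R :=
  pairStar N k xs (fun _ x => g x) ws.

Fixpoint Mstar_cell (k : nat) (xs A : nat -> nat -> R) (w : nat -> {poly R})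
  (i j : nat) : R :=
  match j with
  | 0%N => (w i).[xs i 0%N] + A i 0%N * (w i)^`().[xs i 0%N]
  | j'.+1 => Mstar_cell k xs A w i j' + A i j * (w i)^`().[xs i j]
  end.
Definition Mstar (k : nat) (xs A : nat -> nat -> R) (w : nat -> {poly R}) :
  nat -> nat -> R := fun i j => Mstar_cell k xs A w i j.

Definition ipStar (N k : nat) (xs A : nat -> nat -> R) (v w : nat -> {poly R}) : R :=
  l2Vk N k xs v (Mstar k xs A w).

(* v(x_{i-1/2}^-) : right end of the (periodic) left neighbour *)
Definition vleft (N k : nat) (xs : nat -> nat -> R) (v : nat -> {poly R}) (i : nat) : R :=
  (v (prevc N i)).[xs (prevc N i) k.+1].
Definition jump_right (N k : nat) (xs : nat -> nat -> R) (v : nat -> {poly R}) (i : nat) : R :=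
  (v (nextc N i)).[xs (nextc N i) 0%N] - (v i).[xs i k.+1].
Definition jump_left (N k : nat) (xs : nat -> nat -> R) (v : nat -> {poly R}) (i : nat) : R :=
  (v i).[xs i 0%N] - vleft N k xs v i.

Definition Hstar (N k : nat) (beta : R) (xs A : nat -> nat -> R)
  (v w : nat -> {poly R}) : R :=
  beta * (\sum_(i < N) Qi k xs A i (v i * (w i)^`())
          + \sum_(i < N) (v i).[xs i k.+1] * jump_right N k xs w i
          - \sum_(i < N) A i 0%N * (w i)^`().[xs i 0%N] * jump_left N k xs v i).

Definition fhat (N k : nat) (beta : R) (xs : nat -> nat -> R) (u : nat -> {poly R})
  (i j : nat) : R :=
  if j == 0%N then beta * vleft N k xs u i else beta * (u i).[xs i j].

Definition flux_term (N k : nat) (beta : R) (xs : nat -> nat -> R)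
  (u : nat -> {poly R}) (ws : nat -> nat -> R) : R :=
  \sum_(i < N) \sum_(j < k.+1) ws i j * (fhat N k beta xs u i j - fhat N k beta xs u i j.+1).

(* Legendre polynomials on [-1,1] (P_n(1) = 1), by the Bonnet recurrence *)
Fixpoint legendre2 (n : nat) : {poly R} * {poly R} :=
  (* returns (P_n, P_{n+1}) *)
  match n with
  | 0%N => (1, 'X)
  | n'.+1 => let (p0, p1) := legendre2 n' in
             (p1, ((n'.+1)%:R + 1)^-1 *:
                    ((2 * (n'.+1)%:R + 1) *: ('X * p1) - (n'.+1)%:R *: p0))
  end.
Definition legendre (n : nat) : {poly R} := (legendre2 n).1.

Definition Lshift (k : nat) (xs : nat -> nat -> R) (i n : nat) : {poly R} :=
  legendre n \Po ((2 / hcell k xs i) *: 'X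
                  - ((xs i 0%N + xs i k.+1) / hcell k xs i)%:P).

Definition assumptionS (N k : nat) (xs A : nat -> nat -> R) : Prop :=
  (1 <= k)%N /\
  forall i, (i < N)%N ->
    (forall p : {poly R}, (size p <= 2 * k)%N ->
        integ (xs i 0%N) (xs i k.+1) (fun x => p.[x]) - Qi k xs A i p = 0) /\
    hcell k xs i / (2 * k.-1 + 1)%:R
      - Qi k xs A i (Lshift k xs i k.+1 * Lshift k xs i k.-1) > 0.

Definition inL2 (a b : R) (g : R -> R) : Prop :=
  measurable_fun `[a, b] g /\
  lebesgue_measure.-integrable `[a, b] (fun x => ((g x) ^+ 2)%:E).

End Defs.

(* Main.v *)
Set Warnings "-all".
Require Import Defs.
From HB Require Import structures.
From mathcomp Require Import all_boot all_order all_algebra.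
From mathcomp Require Import all_classical all_reals all_analysis.
From mathcomp Require Import ring lra zify.
Import Order.TTheory GRing.Theory Num.Theory.
Local Open Scope ring_scope.
Set Implicit Arguments. Unset Strict Implicit. Unset Printing Implicit Defensive.
Section FTC.
Import numFieldNormedType.Exports.
Lemma integ_poly (R : realType) (a b : R) (F : {poly R}) : a < b ->
  integ a b (fun x => (F^`()).[x]) = F.[b] - F.[a].
Proof.
move=> ab; rewrite /integ /Rintegral.
rewrite (@continuous_FTC2 R (fun x => (F^`()).[x]) (horner F) a b ab) //.
- exact/continuous_subspaceT/continuous_horner.
- split.
  + move=> x _; exact: derivable_horner.
  + apply: cvg_at_right_filter; exact: continuous_horner.
  + apply: cvg_at_left_filter; exact: continuous_horner.
- by move=> x _; rewrite -derivE.
Qed.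
End FTC.

Section Antid.
Variable R : realType.
Implicit Types p q : {poly R}.

Definition antid p : {poly R} :=
  \poly_(i < (size p).+1) (if i is j.+1 then p`_j / j.+1%:R else 0).

Lemma coef_antid p i : (antid p)`_i = if i is j.+1 then p`_j / j.+1%:R else 0.
Proof.
rewrite coef_poly; case: ltnP => // hi; case: i hi => // j hj.
by rewrite nth_default ?mul0r.
Qed.

Lemma antidK p : (antid p)^`() = p.
Proof.
apply/polyP => i; rewrite coef_deriv coef_antid /=.
by rewrite -[_ *+ i.+1]mulr_natr divfK // pnatr_eq0.
Qed.

Definition Ip (a b : R) p := (antid p).[b] - (antid p).[a].

Lemma Ip_integ a b p : a < b -> integ a b (fun x => p.[x]) = Ip a b p.
Proof. by move=> ab; have := integ_poly (antid p) ab; rewrite antidK. Qed.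

Lemma Ip_deriv a b q : a < b -> Ip a b (q^`()) = q.[b] - q.[a].
Proof. by move=> ab; rewrite -Ip_integ // integ_poly. Qed.

Lemma IpD a b p q : a < b -> Ip a b (p + q) = Ip a b p + Ip a b q.
Proof.
move=> ab; rewrite -{1}(antidK p) -{1}(antidK q) -derivD Ip_deriv //.
rewrite !hornerD /Ip; ring.
Qed.

Lemma IpZ a b c p : a < b -> Ip a b (c *: p) = c * Ip a b p.
Proof.
move=> ab; rewrite -{1}(antidK p) -derivZ Ip_deriv //.
rewrite !hornerZ /Ip; ring.
Qed.

Lemma IpN a b p : a < b -> Ip a b (- p) = - Ip a b p.
Proof. by move=> ab; rewrite -scaleN1r IpZ // mulN1r. Qed.

Lemma IpB a b p q : a < b -> Ip a b (p - q) = Ip a b p - Ip a b q.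
Proof. by move=> ab; rewrite IpD // IpN. Qed.

Lemma Ip0 a b : a < b -> Ip a b 0 = 0.
Proof. by move=> ab; rewrite -(scale0r (0 : {poly R})) IpZ // mul0r. Qed.

Lemma Ip_sum a b (I : Type) (r : seq I) (P : pred I) (F : I -> {poly R}) :
  a < b -> Ip a b (\sum_(i <- r | P i) F i) = \sum_(i <- r | P i) Ip a b (F i).
Proof.
move=> ab; elim/big_rec2: _ => [|i y p _ <-]; first exact: Ip0.
by rewrite IpD.
Qed.

End Antid.
Section Leg.
Variable R : realType.
Local Notation P := (legendre R).
Local Notation J := (Ip (-1 : R) 1).

Lemma cancelC (c : R) (x y : {poly R}) : c != 0 -> c%:P * (x - y) = 0 -> x = y.
Proof.
move=> c0 /eqP; rewrite mulf_eq0 polyC_eq0 (negbTE c0) /= subr_eq0.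
by move/eqP.
Qed.

Lemma deriv1 : (1 : {poly R})^`() = 0.
Proof. by rewrite -polyC1 derivC. Qed.

Lemma P0 : P 0 = 1. Proof. by []. Qed.
Lemma P1 : P 1 = 'X. Proof. by []. Qed.

Lemma Prec n : (n.+2)%:R%:P * P n.+2 =
  (2 * n + 3)%:R%:P * ('X * P n.+1) - (n.+1)%:R%:P * P n.
Proof.
have E : P n.+2 = ((n.+1)%:R + 1)^-1 *:
   ((2 * (n.+1)%:R + 1) *: ('X * P n.+1) - (n.+1)%:R *: P n).
  by rewrite /legendre /=; case: (legendre2 R n).
rewrite E natr1 mul_polyC scalerA mulrC.
rewrite mulVf; last by rewrite pnatr_eq0.
rewrite scale1r -!mul_polyC natrD natrM; ring.
Qed.

Lemma DPrec n : (n.+2)%:R%:P * (P n.+2)^`() =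
  (2 * n + 3)%:R%:P * (P n.+1 + 'X * (P n.+1)^`()) - (n.+1)%:R%:P * (P n)^`().
Proof.
have := congr1 deriv (Prec n).
by rewrite !derivB !derivM !derivC derivX !mul0r !add0r mul1r.
Qed.

Lemma toz (l r : {poly R}) : l = r -> l - r = 0.
Proof. by move->; rewrite subrr. Qed.

Lemma lc4 (c : R) (x y d1 d2 d3 d4 q1 q2 q3 q4 : {poly R}) : c != 0 ->
  c%:P * (x - y) = q1 * d1 + q2 * d2 + q3 * d3 + q4 * d4 ->
  d1 = 0 -> d2 = 0 -> d3 = 0 -> d4 = 0 -> x = y.
Proof.
move=> c0 e h1 h2 h3 h4; apply: (cancelC c0).
by rewrite e h1 h2 h3 h4 !mulr0 !addr0.
Qed.

Definition Sprop m := 'X * (P m.+1)^`() - (P m)^`() = (m.+1)%:R%:P * P m.+1.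

Lemma Aform m : Sprop m ->
  (P m.+2)^`() = (2 * m + 3)%:R%:P * P m.+1 + (P m)^`().
Proof.
rewrite /Sprop => S.
apply: (lc4 (c := (m.+2)%:R) (q1 := 1) (q2 := (2 * m + 3)%:R%:P) (q3 := 0) (q4 := 0)
   _ _ (toz (DPrec m)) (toz S) (erefl 0) (erefl 0)); first by rewrite pnatr_eq0.
rewrite ?natrD ?natrM; ring.
Qed.

Lemma Sall m : Sprop m.
Proof.
suff : Sprop m /\ Sprop m.+1 by case.
elim: m => [|m [S0 S1]].
  have e2 := Prec 0.
  have e2' := DPrec 0.
  rewrite P1 P0 derivX deriv1 in e2 e2'.
  rewrite /Sprop P1 P0 derivX deriv1 subr0 mulr1 mul1r; split => //.
  apply: (lc4 (c := 2) (q1 := 'X) (q2 := -2%:P) (q3 := 0) (q4 := 0)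
     _ _ (toz e2') (toz e2) (erefl 0) (erefl 0)); first by rewrite pnatr_eq0.
  ring.
split => //.
have A1 := Aform S0.
have A2 := Aform S1.
rewrite /Sprop.
apply: (lc4 (c := 1) (q1 := 'X) (q2 := -1) (q3 := 1) (q4 := -1)
   _ _ (toz A2) (toz A1) (toz S0) (toz (Prec m.+1))); first by rewrite oner_eq0.
rewrite ?natrD ?natrM; ring.
Qed.

Lemma Call m : (P m.+1)^`() = 'X * (P m)^`() + (m.+1)%:R%:P * P m.
Proof.
case: m => [|m]; first by rewrite P1 P0 derivX deriv1 mulr0 add0r mul1r.
apply: (lc4 (c := 1) (q1 := 1) (q2 := -1) (q3 := 0) (q4 := 0)
   _ _ (toz (Aform (Sall m))) (toz (Sall m)) (erefl 0) (erefl 0)); first by rewrite oner_eq0.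
rewrite ?natrD ?natrM; ring.
Qed.

Lemma Dform m : (1 - 'X^2) * (P m.+1)^`() = (m.+1)%:R%:P * (P m - 'X * P m.+1).
Proof.
apply: (lc4 (c := 1) (q1 := 1) (q2 := -'X) (q3 := 0) (q4 := 0)
   _ _ (toz (Call m)) (toz (Sall m)) (erefl 0) (erefl 0)); first by rewrite oner_eq0.
rewrite ?natrD ?natrM; ring.
Qed.

Lemma Eform n : ((1 - 'X^2) * (P n)^`())^`() = - (n * n.+1)%:R%:P * P n.
Proof.
case: n => [|m]; first by rewrite P0 deriv1 mulr0 deriv0 mul0n mulr0n polyC0 oppr0 mul0r.
rewrite Dform derivM derivC mul0r add0r derivB derivM derivX mul1r.
apply: (lc4 (c := 1) (q1 := - (m.+1)%:R%:P) (q2 := 0) (q3 := 0) (q4 := 0)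
   _ _ (toz (Sall m)) (erefl 0) (erefl 0) (erefl 0)); first by rewrite oner_eq0.
rewrite ?natrD ?natrM; ring.
Qed.

Lemma IpC a b (c : R) p : a < b -> Ip a b (c%:P * p) = c * Ip a b p.
Proof. by move=> ab; rewrite mul_polyC IpZ. Qed.

Lemma Portho m n : m != n -> J (P m * P n) = 0.
Proof.
move=> mn.
have m1 : (-1 : R) < 1 by rewrite gtrN // ltr01.
set G := (1 - 'X^2) * (P m)^`() * P n - (1 - 'X^2) * (P n)^`() * P m.
have hG : G^`() = ((n * n.+1)%:R - (m * m.+1)%:R)%:P * (P m * P n).
  rewrite /G derivB (derivM ((1 - 'X^2) * (P m)^`())) (derivM ((1 - 'X^2) * (P n)^`())).
  rewrite !Eform; rewrite ?natrD ?natrM; ring.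
have := Ip_deriv G m1; rewrite hG IpC //.
have -> : G.[1] - G.[-1] = 0.
  by rewrite /G !hornerE; ring.
move/eqP; rewrite mulf_eq0 => /orP[|/eqP //].
rewrite subr_eq0 eqr_nat => /eqP e; exfalso; move: mn.
case: (ltngtP m n) => // h _.
- have : (m * m.+1 < n * n.+1)%N by apply: ltn_mul.
  by rewrite e ltnn.
- have : (n * n.+1 < m * m.+1)%N by apply: ltn_mul.
  by rewrite e ltnn.
Qed.

Lemma m1lt1 : (-1 : R) < 1.
Proof. by rewrite gtrN // ltr01. Qed.

Lemma Pnorm n : J (P n * P n) = 2 / (2 * n + 1)%:R.
Proof.
have m1 := m1lt1.
elim: n => [|n IH].
  by rewrite P0 mulr1 -derivX Ip_deriv // !hornerX muln0 add0n divr1 opprK.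
have T : J ('X * (P n.+1 * P n)) = (n.+1)%:R * J (P n * P n) / (2 * n + 3)%:R.
  have := congr1 (fun p => J (p * P n)) (Prec n).
  rewrite /= -mulrA IpC // Portho; last by rewrite gtn_eqF.
  rewrite mulr0 mulrBl IpB // -!mulrA !IpC // => e.
  have d0 : (2 * n + 3)%:R != 0 :> R by rewrite pnatr_eq0 addn_eq0 andbF.
  move: e; set t := Ip (-1) 1 ('X * (P n.+1 * P n)); set u := Ip (-1) 1 (P n * P n) => e.
  have et : (2 * n + 3)%:R * t = n.+1%:R * u.
    by apply/eqP; rewrite -subr_eq0 -e.
  by rewrite -[t in LHS](mulKf d0) et; ring.
have S : (n.+1)%:R * J (P n.+1 * P n.+1) = (2 * n + 1)%:R * J ('X * (P n.+1 * P n)).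
  case: n IH T => [|m] IH T.
    by rewrite P1 P0 mulr1 !mul1r.
  have := congr1 (fun p => J (p * P m.+2)) (Prec m).
  rewrite /= -mulrA IpC // => ->.
  rewrite mulrBl IpB // -!mulrA !IpC // Portho; last by rewrite ltn_eqF.
  rewrite mulr0 subr0 (mulrC (P m.+1)) mulnS; congr (_ * _).
  by apply: (congr1 (fun k => k%:R)); lia.
have n1 : (n.+1)%:R != 0 :> R by rewrite pnatr_eq0.
rewrite T IH in S.
rewrite -[LHS](mulKf n1) S.
have h1 : (2 * n + 1)%:R != 0 :> R by rewrite pnatr_eq0 addn_eq0 andbF.
have h3 : (2 * n + 3)%:R != 0 :> R by rewrite pnatr_eq0 addn_eq0 andbF.
have -> : (2 * n.+1 + 1)%:R = (2 * n + 3)%:R :> R by apply: (congr1 (fun k => k%:R)); lia.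
field; apply/and3P; split.
- by move: h3; rewrite natrD natrM.
- by move: h1; rewrite natrD natrM.
- by move: n1; rewrite -natr1 addrC.
Qed.

End Leg.
Arguments P0 {R}. Arguments P1 {R}. Arguments Prec {R}. Arguments DPrec {R}.
Arguments Sall {R}. Arguments Call {R}. Arguments Dform {R}. Arguments Eform {R}.
Arguments Portho {R}. Arguments Pnorm {R}. Arguments deriv1 {R}. Arguments m1lt1 {R}.

Section Shift.
Variable R : realType.
Local Notation P := (legendre R).
Local Notation J := (Ip (-1 : R) 1).
Variables a b : R.
Hypothesis ab : a < b.

Definition phi : {poly R} := (2 / (b - a)) *: 'X - ((a + b) / (b - a))%:P.
Definition L n := P n \Po phi.

Lemma hpos : 0 < b - a. Proof. by rewrite subr_gt0. Qed.
Lemma hnz : b - a != 0. Proof. by rewrite gt_eqF // hpos. Qed.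

Lemma phi_b : phi.[b] = 1.
Proof. by rewrite /phi !hornerE; field; exact: hnz. Qed.
Lemma phi_a : phi.[a] = -1.
Proof. by rewrite /phi !hornerE; field; exact: hnz. Qed.

Lemma phi_deriv : phi^`() = (2 / (b - a))%:P.
Proof. by rewrite /phi derivB derivZ derivX derivC subr0 -mul_polyC mulr1. Qed.

Lemma Ip_comp p : Ip a b (p \Po phi) = (b - a) / 2 * J p.
Proof.
have e : p \Po phi = ((b - a) / 2 *: (antid p \Po phi))^`().
  rewrite derivZ deriv_comp antidK phi_deriv -mul_polyC.
  rewrite mulrCA -polyCM.
  have -> : (b - a) / 2 * (2 / (b - a)) = 1 by field; exact: hnz.
  by rewrite mulr1.
rewrite e Ip_deriv // !hornerZ !horner_comp phi_a phi_b /Ip; ring.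
Qed.

Lemma Lortho m n : m != n -> Ip a b (L m * L n) = 0.
Proof. by move=> mn; rewrite /L -comp_polyM Ip_comp Portho // mulr0. Qed.

Lemma Lnorm n : Ip a b (L n * L n) = (b - a) / (2 * n + 1)%:R.
Proof.
rewrite /L -comp_polyM Ip_comp Pnorm.
have h : (2 * n + 1)%:R != 0 :> R by rewrite pnatr_eq0 addn_eq0 andbF.
have := hnz => hh.
field; move: h; by rewrite natrD natrM.
Qed.

Lemma L0 : L 0 = 1. Proof. by rewrite /L P0 comp_polyC. Qed.
Lemma L1 : L 1 = phi. Proof. by rewrite /L P1 comp_polyX. Qed.

Lemma Lrec n : (n.+2)%:R%:P * L n.+2 =
  (2 * n + 3)%:R%:P * (phi * L n.+1) - (n.+1)%:R%:P * L n.
Proof.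
have := congr1 (fun p => p \Po phi) (Prec n).
by rewrite /= !comp_polyB !comp_polyM !comp_polyC comp_polyX.
Qed.

Definition cc := (a + b) / (b - a).

Lemma coef_phiM p j : (phi * p)`_j =
  (if j is j'.+1 then 2 / (b - a) * p`_j' else 0) - cc * p`_j.
Proof.
rewrite /phi mulrBl -scalerAl coefB coefZ coefCM coefXM /cc.
by case: j => [|j] //=; rewrite mulr0.
Qed.

Lemma Lrec_coef n j : (n.+2)%:R * (L n.+2)`_j =
  (2 * n + 3)%:R * ((if j is j'.+1 then 2 / (b - a) * (L n.+1)`_j' else 0)
     - cc * (L n.+1)`_j) - (n.+1)%:R * (L n)`_j.
Proof.
have := congr1 (fun p : {poly R} => p`_j) (Lrec n).
by rewrite /= coefB !coefCM coef_phiM.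
Qed.

Lemma Lhi n j : (n < j)%N -> (L n)`_j = 0.
Proof.
suff : (forall j, (n < j)%N -> (L n)`_j = 0) /\ (forall j, (n.+1 < j)%N -> (L n.+1)`_j = 0).
  by case=> h _; exact: h.
clear j; elim: n => [|n [IH1 IH2]].
  split => j'.
    by rewrite L0 coefE; case: j'.
  rewrite L1 -[phi]mulr1 coef_phiM; case: j' => [|[|j']] //= _; by rewrite !coefE /= !mulr0 subr0.
split; first exact: IH2.
move=> j' hj.
have := Lrec_coef n j'.
case: j' hj => [|j'] // hj.
have h1 : (n < j'.+1)%N by lia.
have h2 : (n.+1 < j')%N by lia.
have h3 : (n.+1 < j'.+1)%N by lia.
rewrite (IH1 _ h1) (IH2 _ h2) (IH2 _ h3) !(mulr0, subr0) => /eqP.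
by rewrite mulf_eq0 pnatr_eq0 /= => /eqP.
Qed.

Lemma Llead n : (n.+1)%:R * (L n.+1)`_n.+1 = (2 * n + 1)%:R * (2 / (b - a)) * (L n)`_n.
Proof.
case: n => [|n].
  by rewrite L1 L0 -[phi]mulr1 coef_phiM /= !coefE /=; ring.
rewrite Lrec_coef (@Lhi n.+1 n.+2) // (@Lhi n n.+2) //.
rewrite !(mulr0, subr0) mulrA.
congr (_ * _ * _); by apply: (congr1 (fun k => k%:R)); lia.
Qed.

Lemma Lpos n : 0 < (L n)`_n.
Proof.
elim: n => [|n IH]; first by rewrite L0 coefE ltr01.
have h := Llead n.
have n1 : 0 < (n.+1)%:R :> R by rewrite ltr0n.
have : 0 < (n.+1)%:R * (L n.+1)`_n.+1.
  rewrite h; apply: mulr_gt0 => //; apply: mulr_gt0; first by rewrite ltr0n addn1.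
  by apply: divr_gt0 => //; exact: hpos.
by rewrite pmulr_rgt0.
Qed.

End Shift.
Section Aux.
Variable R : realType.

Lemma coefM_top (p q : {poly R}) m n : (size p <= m.+1)%N -> (size q <= n.+1)%N ->
  (p * q)`_(m + n) = p`_m * q`_n.
Proof.
move=> /leq_sizeP hp /leq_sizeP hq.
have hm : (m < (m + n).+1)%N by lia.
rewrite coefM (bigD1 (Ordinal hm)) //= big1 ?addr0.
  by congr (_ * _); congr (q`_ _); lia.
move=> [j hj] /= hne.
have hne' : j != m by apply: contra hne => /eqP e; apply/eqP; apply: val_inj => /=.
case: (ltngtP j m) hne' => // h _.
- by rewrite hq ?mulr0 //; lia.
- by rewrite hp ?mul0r //; lia.
Qed.

Lemma size_mul_le (p q : {poly R}) m n : (size p <= m.+1)%N -> (size q <= n.+1)%N ->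
  (size (p * q)%R <= (m + n).+1)%N.
Proof.
move=> hp hq; apply: leq_trans (size_polyMleq p q) _; lia.
Qed.

Lemma size_lt_top (p : {poly R}) n : (size p <= n.+2)%N -> p`_n.+1 = 0 ->
  (size p <= n.+1)%N.
Proof.
move=> /leq_sizeP h h1; apply/leq_sizeP => j hj.
have [hlt|hge] := ltnP n.+1 j; first by apply: h.
by have -> : j = n.+1 by lia.
Qed.

End Aux.

Section Shift2.
Variable R : realType.
Variables a b : R.
Hypothesis ab : a < b.
Local Notation L := (L a b).

Lemma Lsize n : (size (L n) <= n.+1)%N.
Proof. by apply/leq_sizeP => j hj; apply: Lhi. Qed.

Lemma Lexpand n (w : {poly R}) : (size w <= n.+1)%N ->
  exists al : nat -> R, w = \sum_(m < n.+1) al m *: L m.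
Proof.
elim: n w => [|n IH] w hw.
  exists (fun _ => w`_0); rewrite big_ord1 L0 -mul_polyC mulr1.
  exact: size1_polyC.
have lp := Lpos ab n.+1.
set c := w`_n.+1 / (L n.+1)`_n.+1.
have hw1 : (size (w - c *: L n.+1)%R <= n.+1)%N.
  apply: size_lt_top.
    apply/leq_sizeP => j hj; rewrite coefB coefZ.
    by move/leq_sizeP: hw => hw; rewrite hw // Lhi // mulr0 subr0.
  by rewrite coefB coefZ /c divfK ?subrr // gt_eqF.
have [al hal] := IH _ hw1.
exists (fun m => if m == n.+1 then c else al m).
rewrite big_ord_recr /= eqxx -[w](subrK (c *: L n.+1)) hal.
congr (_ + _); apply: eq_bigr => m _ /=.
by rewrite ltn_eqF.
Qed.

Lemma Ip_ww n (al : nat -> R) :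
  Ip a b ((\sum_(m < n) al m *: L m) * (\sum_(m < n) al m *: L m)) =
  \sum_(m < n) al m ^+ 2 * ((b - a) / (2 * m + 1)%:R).
Proof.
rewrite mulr_suml Ip_sum //; apply: eq_bigr => m _.
rewrite mulr_sumr Ip_sum // (bigD1 m) //= big1 ?addr0.
  by rewrite -scalerAl -scalerAr !IpZ // Lnorm // mulrA expr2.
move=> j hj; rewrite -scalerAl -scalerAr !IpZ // Lortho ?mulr0 //.
by apply: contra hj => /eqP e; apply/eqP; apply: val_inj.
Qed.

Lemma coef_expand n (al : nat -> R) :
  (\sum_(m < n.+1) al m *: L m)`_n = al n * (L n)`_n.
Proof.
rewrite coef_sum big_ord_recr /= big1 ?add0r ?coefZ //.
by move=> [m hm] _ /=; rewrite coefZ Lhi ?mulr0.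
Qed.

End Shift2.
Section QiLin.
Variable R : realType.
Variables (k : nat) (xs A : nat -> nat -> R) (i : nat).

Lemma QiD p q : Qi k xs A i (p + q) = Qi k xs A i p + Qi k xs A i q.
Proof. by rewrite /Qi -big_split; apply: eq_bigr => j _; rewrite hornerD mulrDr. Qed.

Lemma QiZ c p : Qi k xs A i (c *: p) = c * Qi k xs A i p.
Proof. by rewrite /Qi mulr_sumr; apply: eq_bigr => j _; rewrite hornerZ mulrCA. Qed.

Lemma QiB p q : Qi k xs A i (p - q) = Qi k xs A i p - Qi k xs A i q.
Proof. by rewrite -scaleN1r QiD QiZ mulN1r. Qed.

Lemma Mcell_formula (w : nat -> {poly R}) j :
  Mstar_cell k xs A w i j = (w i).[xs i 0] + \sum_(t < j.+1) A i t * (w i)^`().[xs i t].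
Proof.
elim: j => [|j IH].
  by rewrite /= big_ord1; reflexivity.
by rewrite /= IH [in RHS]big_ord_recr /= addrA.
Qed.

End QiLin.

Section Cell.
Variables (R : realType) (K : nat) (xs A : nat -> nat -> R) (i : nat).
Local Notation k := K.+1.
Local Notation a := (xs i 0).
Local Notation b := (xs i k.+1).
Local Notation Q := (Qi k xs A i).
Local Notation I := (Ip (xs i 0) (xs i k.+1)).
Hypothesis ab : a < b.
Hypothesis exact : forall p : {poly R}, (size p <= 2 * k)%N -> I p = Q p.
Hypothesis cond2 : hcell k xs i / (2 * k.-1 + 1)%:R
   - Qi k xs A i (Lshift k xs i k.+1 * Lshift k xs i k.-1) > 0.

Definition rr := I 'X^(2 * k) - Q 'X^(2 * k).

Lemma Rtop (q : {poly R}) : (size q <= (2 * k).+1)%N -> I q - Q q = q`_(2 * k) * rr.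
Proof.
move=> hq.
set q1 := q - q`_(2 * k) *: 'X^(2 * k).
have h1 : (size q1 <= 2 * k)%N.
  have e : (2 * k = (2 * K + 1).+1)%N by lia.
  rewrite e; apply: size_lt_top; first last.
    by rewrite /q1 coefB coefZ coefXn -e eqxx mulr1 subrr.
  apply/leq_sizeP => j hj; rewrite /q1 coefB coefZ coefXn.
  move/leq_sizeP: hq => hq; rewrite (hq j); last by lia.
  by rewrite (_ : (j == 2 * k)%N = false) ?mulr0 ?subr0 //; apply/eqP; lia.
have -> : q = q1 + q`_(2 * k) *: 'X^(2 * k) by rewrite /q1 subrK.
rewrite IpD // QiD IpZ // QiZ exact // /rr coefD coefZ coefXn eqxx mulr1.
move/leq_sizeP: h1 => h1; rewrite h1 // add0r; ring.
Qed.

Lemma cell_inj (w : {poly R}) : (size w <= k.+1)%N ->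
  (forall j, (j <= k)%N -> Mstar_cell k xs A (fun _ => w) i j = 0) -> w = 0.
Proof.
move=> hw hM.
have H0 : w.[a] + A i 0 * w^`().[a] = 0 by have := hM 0%N isT.
have Hj : forall t, (t < k)%N -> A i t.+1 * w^`().[xs i t.+1] = 0.
  move=> t ht; have := hM t.+1 ht; rewrite /= (hM t) ?add0r //; exact: ltnW.
set p := antid w - ((antid w).[b])%:P.
have pb : p.[b] = 0 by rewrite /p !hornerE subrr.
have dp : p^`() = w by rewrite derivB derivC subr0 antidK.
have hQ : Q (w^`() * p) = - (w.[a] * p.[a]).
  rewrite /Qi big_ord_recl big_ord_recr /= big1.
    rewrite !hornerM pb !mulr0 !addr0 mulrA.
    have -> : A i 0 * w^`().[a] = - w.[a] by rewrite -[- _]add0r -H0; ring.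
    by rewrite mulNr.
  move=> t _; rewrite hornerM mulrA.
  by rewrite /bump /= add1n Hj ?mul0r //.
have hI : I (w^`() * p) = - (w.[a] * p.[a]) - I (w * w).
  have e : w^`() * p = (w * p)^`() - w * w by rewrite derivM dp; ring.
  by rewrite e IpB // Ip_deriv // !hornerM pb mulr0 sub0r.
have hsw : (size w^`() <= K.+1)%N.
  apply/leq_sizeP => j hj; rewrite coef_deriv.
  by move/leq_sizeP: hw => hw; rewrite hw ?mul0rn //; lia.
have hsp : (size p <= K.+3)%N.
  apply/leq_sizeP => j hj; rewrite coefB coef_antid coefC.
  case: j hj => [|j] hj //.
  by move/leq_sizeP: hw => hw; rewrite hw ?mul0r ?subr0 //; lia.
have hsz := size_mul_le hsw hsp.
have e2k : (K + K.+2 = 2 * k)%N by lia.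
have hR := Rtop (q := w^`() * p).
rewrite -e2k in hR.
have {hR} hR := hR (leq_trans hsz (leqnn _)).
rewrite coefM_top // coef_deriv coefB coef_antid coefC /= subr0 in hR.
rewrite hI hQ in hR.
have hww : I (w * w) = - (w`_k *+ k * (w`_k / K.+2%:R) * rr) by rewrite -hR; ring.
have [al hal] := Lexpand ab hw.
have wk : w`_k = al k * (L a b k)`_k by rewrite hal coef_expand.
rewrite wk in hww; rewrite hal Ip_ww // in hww.
have c2 : 0 < (b - a) / (2 * K + 1)%:R - Q (L a b K.+2 * L a b K) by exact: cond2.
have e2 : (K.+2 + K = 2 * k)%N by lia.
have hq2 := Rtop (q := L a b K.+2 * L a b K).
rewrite -e2 coefM_top ?Lsize // Lortho // in hq2; last by rewrite gtn_eqF.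
have {hq2} hq2 := hq2 (size_mul_le (Lsize ab K.+2) (Lsize ab K)).
have eQ : Q (L a b K.+2 * L a b K) = - ((L a b K.+2)`_K.+2 * (L a b K)`_K * rr).
  by rewrite -hq2; ring.
rewrite eQ opprK in c2.
have l1 := Llead ab K.+1.
have l0 := Llead ab K.
have p0 := Lpos ab K.
have p1 := Lpos ab K.+1.
have p2 := Lpos ab K.+2.
have hp := hpos ab.
move: hww c2 l1 l0 p0 p1 p2.
set lam0 := (L a b K)`_K.
set lam1 := (L a b K.+1)`_K.+1.
set lam2 := (L a b K.+2)`_K.+2.
set h := b - a.
rewrite big_ord_recr /=.
set S' := \sum_(m < k) _.
move=> hww c2 l1 l0 p0 p1 p2.
have S0 : 0 <= S'.
  apply: sumr_ge0 => m _; apply: mulr_ge0; first exact: sqr_ge0.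
  by apply: divr_ge0; [exact: ltW | exact: ler0n].
set n := K%:R : R.
have n0 : 0 <= n by exact: ler0n.
have ek : k%:R = n + 1 :> R by rewrite /n -natr1.
have ek2 : K.+2%:R = n + 2 :> R by rewrite /n -!natr1; ring.
have e2k1 : (2 * k + 1)%:R = 2 * n + 3 :> R.
  rewrite (_ : (2 * k + 1 = 2 * K + 3)%N); last by lia.
  by rewrite natrD natrM.
have e2K1 : (2 * K + 1)%:R = 2 * n + 1 :> R by rewrite natrD natrM.
rewrite -[_ *+ k]mulr_natr ek ek2 e2k1 in hww.
rewrite e2K1 in c2.
rewrite ek2 e2k1 in l1.
rewrite ek e2K1 in l0.
set B := h / (2 * n + 3) + lam1 ^+ 2 * (n + 1) / (n + 2) * rr.
have hB : S' + al k ^+ 2 * B = 0.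
  have hS' : S' = - (al k * lam1 * (n + 1) * (al k * lam1 / (n + 2)) * rr)
     - al k ^+ 2 * (h / (2 * n + 3)) by rewrite -hww; ring.
  by rewrite hS' /B; ring.
have nz2 : n + 2 != 0 by rewrite gt_eqF //; lra.
have nz3 : 2 * n + 3 != 0 by rewrite gt_eqF //; lra.
have nz1 : 2 * n + 1 != 0 by rewrite gt_eqF //; lra.
have nzh : h != 0 by rewrite gt_eqF.
have elam2 : lam2 = (2 * n + 3) * (2 / h) * lam1 / (n + 2).
  by rewrite -l1; field.
have elam0 : lam0 = (n + 1) * lam1 / ((2 * n + 1) * (2 / h)).
  by rewrite l0; field; rewrite -/n nzh nz1.
have Bpos : 0 < B.
  have -> : B = (2 * n + 1) / (2 * n + 3) * (h / (2 * n + 1) + lam2 * lam0 * rr).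
    rewrite /B elam2 elam0; field.
    by rewrite -/n nzh nz1 nz2 nz3.
  apply: mulr_gt0 => //; apply: divr_gt0; lra.
have X0 : 0 <= al k ^+ 2 * B by apply: mulr_ge0; [exact: sqr_ge0 | exact: ltW].
have hX : al k ^+ 2 * B = 0 by lra.
have hS : S' = 0 by lra.
have alk : al k = 0.
  move/eqP: hX; rewrite mulf_eq0 (gt_eqF Bpos) orbF expf_eq0 /=.
  by move/eqP.
have alm : forall m : 'I_k, al m = 0.
  move=> m; have := psumr_eq0P _ hS (i := m) isT.
  move/(_ _)/eqP; rewrite mulf_eq0 expf_eq0 /=.
  have hpos' : 0 < h / (2 * m + 1)%:R by apply: divr_gt0 => //; rewrite ltr0n addn1.
  rewrite (gt_eqF hpos') orbF => /(_ _)/eqP; apply.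
  by move=> j _; apply: mulr_ge0; [exact: sqr_ge0 | apply: divr_ge0; [exact: ltW|exact: ler0n]].
rewrite hal big_ord_recr /= alk scale0r addr0 big1 // => m _.
by rewrite alm scale0r.
Qed.

End Cell.
Section Surj.
Variable R : realType.
Variables (k : nat) (xs A : nat -> nat -> R).

Definition Mc (i : nat) (p : {poly R}) j := Mstar_cell k xs A (fun _ => p) i j.

Lemma Mcell_local (w : nat -> {poly R}) i j : Mstar_cell k xs A w i j = Mc i (w i) j.
Proof. by elim: j => [|j IH] //=; rewrite IH. Qed.

Lemma McD i p q j : Mc i (p + q) j = Mc i p j + Mc i q j.
Proof.
rewrite /Mc; elim: j => [|j IH] /=; first by rewrite derivD !hornerD; ring.
by rewrite IH derivD !hornerD; ring.
Qed.

Lemma McZ i c p j : Mc i (c *: p) j = c * Mc i p j.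
Proof.
rewrite /Mc; elim: j => [|j IH] /=; first by rewrite derivZ !hornerZ; ring.
by rewrite IH derivZ !hornerZ; ring.
Qed.

Lemma Mc0 i j : Mc i 0 j = 0.
Proof. by rewrite -(scale0r (0 : {poly R})) McZ mul0r. Qed.

Lemma Mc_sum i j (n : nat) (F : 'I_n -> {poly R}) :
  Mc i (\sum_(m < n) F m) j = \sum_(m < n) Mc i (F m) j.
Proof.
elim/big_rec2: _ => [|m y p _ <-]; first exact: Mc0.
by rewrite McD.
Qed.

Definition Mm i : 'M[R]_(k.+1) := \matrix_(m < k.+1, j < k.+1) Mc i ('X^m) j.
Definition polyrow (c : 'rV[R]_(k.+1)) : {poly R} := \poly_(m < k.+1) c 0 (inord m).
Definition wsol (ws : nat -> nat -> R) (i : nat) : {poly R} :=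
  polyrow ((\row_(j < k.+1) ws i j) *m invmx (Mm i)).

Lemma Mc_row i c (j : 'I_k.+1) : Mc i (polyrow c) j = (c *m Mm i) 0 j.
Proof.
rewrite mxE /polyrow poly_def Mc_sum; apply: eq_bigr => m _.
by rewrite McZ mxE inord_val.
Qed.

Lemma polyrow_size c : (size (polyrow c) <= k.+1)%N.
Proof. exact: size_poly. Qed.

Lemma Mm_unit i : (forall p : {poly R}, (size p <= k.+1)%N ->
    (forall j, (j <= k)%N -> Mc i p j = 0) -> p = 0) -> Mm i \in unitmx.
Proof.
move=> inj; rewrite unitmxE unitfE; apply/negP => /det0P [v vn0 hv].
have e : polyrow v = 0.
  apply: inj; first exact: polyrow_size.
  move=> j hj; have hj' : (j < k.+1)%N by [].
  by rewrite (Mc_row i v (Ordinal hj')) hv mxE.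
move/negP: vn0; apply; apply/eqP/rowP => m.
have := congr1 (fun p : {poly R} => p`_m) e.
by rewrite /polyrow coef_poly ltn_ord coef0 !mxE inord_val.
Qed.

Lemma wsol_spec ws i : (forall p : {poly R}, (size p <= k.+1)%N ->
    (forall j, (j <= k)%N -> Mc i p j = 0) -> p = 0) ->
  forall j, (j <= k)%N -> Mc i (wsol ws i) j = ws i j.
Proof.
move=> inj j hj; have hj' : (j < k.+1)%N by [].
rewrite /wsol (Mc_row i _ (Ordinal hj')) mulmxKV; last exact: Mm_unit.
by rewrite mxE.
Qed.

End Surj.
Section Flux.
Variable R : realType.

Lemma sbp (n : nat) (g f : nat -> R) :
  \sum_(j < n.+1) g j * (f j - f j.+1) =
  g 0%N * f 0%N - g n * f n.+1 + \sum_(j < n) (g j.+1 - g j) * f j.+1.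
Proof.
elim: n => [|n IH]; first by rewrite big_ord1 big_ord0; ring.
rewrite big_ord_recr /= IH [in RHS]big_ord_recr /=; ring.
Qed.

Variables (N k : nat) (beta : R) (xs A : nat -> nat -> R) (v w : nat -> {poly R}).

Definition Tcell i := Qi k xs A i (v i * (w i)^`())
  + (v i).[xs i k.+1] * jump_right N k xs w i
  - A i 0%N * (w i)^`().[xs i 0%N] * jump_left N k xs v i.

Definition Dcell i := vleft N k xs v i * (w i).[xs i 0%N]
  - (v i).[xs i k.+1] * (w (nextc N i)).[xs (nextc N i) 0%N].

Lemma flux_cell i : xs i 0 < xs i k.+1 ->
  Ip (xs i 0) (xs i k.+1) (w i)^`() = Qi k xs A i (w i)^`() ->
  \sum_(j < k.+1) Mstar k xs A w i j *
     (fhat N k beta xs v i j - fhat N k beta xs v i j.+1)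
  = beta * (Tcell i + Dcell i).
Proof.
move=> ab ex.
rewrite (sbp k (fun j => Mstar k xs A w i j) (fun j => fhat N k beta xs v i j)).
have hgk : Mstar k xs A w i k = (w i).[xs i k.+1] - A i k.+1 * (w i)^`().[xs i k.+1].
  rewrite /Mstar Mcell_formula.
  have := ex; rewrite Ip_deriv // /Qi big_ord_recr /= => e.
  apply/eqP; rewrite -subr_eq0; apply/eqP.
  have -> : (w i).[xs i k.+1] = (w i).[xs i 0] + ((w i).[xs i k.+1] - (w i).[xs i 0]) by ring.
  by rewrite e; ring.
rewrite hgk /Mstar /= /fhat /=.
have hmid : \sum_(j < k)
     (Mstar_cell k xs A w i j + A i j.+1 * (w i)^`().[xs i j.+1] -
      Mstar_cell k xs A w i j) * (beta * (v i).[xs i j.+1])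
  = beta * \sum_(j < k) A i j.+1 * ((v i).[xs i j.+1] * (w i)^`().[xs i j.+1]).
  rewrite mulr_sumr; apply: eq_bigr => j _ /=; ring.
rewrite hmid /Tcell /Dcell /Qi big_ord_recl big_ord_recr /=.
have hmid2 : \sum_(j < k) A i (bump 0 j) * (v i * (w i)^`()).[xs i (bump 0 j)]
  = \sum_(j < k) A i j.+1 * ((v i).[xs i j.+1] * (w i)^`().[xs i j.+1]).
  by apply: eq_bigr => j _; rewrite hornerM /bump /= add1n.
rewrite hmid2 !hornerM /jump_right /jump_left; ring.
Qed.

Hypothesis N0 : (0 < N)%N.

Lemma nextc_lt i : (i < N)%N -> (nextc N i < N)%N.
Proof. by rewrite /nextc; case: eqP => [_|ne] //; lia. Qed.

Lemma prev_next i : (i < N)%N -> prevc N (nextc N i) = i.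
Proof.
rewrite /nextc; case: eqP => [e|ne] hi; rewrite /prevc /=; first by rewrite -e.
by [].
Qed.

Definition nexto (i : 'I_N) : 'I_N := Ordinal (nextc_lt (ltn_ord i)).

Lemma nexto_inj : injective nexto.
Proof.
move=> i j /(congr1 val) /= e; apply: val_inj.
by rewrite -[LHS](prev_next (ltn_ord i)) -[RHS](prev_next (ltn_ord j)) e.
Qed.

Lemma sumD0 : \sum_(i < N) Dcell i = 0.
Proof.
rewrite /Dcell sumrB; apply/eqP; rewrite subr_eq0; apply/eqP.
rewrite (reindex_inj nexto_inj); apply: eq_bigr => i _ /=.
by rewrite /vleft prev_next.
Qed.

Lemma flux_H : (forall i, (i < N)%N -> xs i 0 < xs i k.+1) ->
  (forall i, (i < N)%N ->
     Ip (xs i 0) (xs i k.+1) (w i)^`() = Qi k xs A i (w i)^`()) ->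
  flux_term N k beta xs v (Mstar k xs A w) = Hstar N k beta xs A v w.
Proof.
move=> hab hex.
rewrite /flux_term (eq_bigr _ (fun (i : 'I_N) _ => flux_cell (hab i (ltn_ord i)) (hex i (ltn_ord i)))).
rewrite -mulr_sumr big_split /= sumD0 addr0 /Hstar /Tcell.
by rewrite sumrB big_split.
Qed.

End Flux.
Section Ext.
Variable R : realType.
Variables (N k : nat) (xs : nat -> nat -> R) (ws1 ws2 : nat -> nat -> R).
Hypothesis agree : forall i j, (i < N)%N -> (j <= k)%N -> ws1 i j = ws2 i j.

Lemma pairStar_ext f : pairStar N k xs f ws1 = pairStar N k xs f ws2.
Proof.
apply: eq_bigr => i _; apply: eq_bigr => j _.
by rewrite agree // -ltnS ltn_ord.
Qed.

Lemma flux_ext beta v : flux_term N k beta xs v ws1 = flux_term N k beta xs v ws2.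
Proof.
apply: eq_bigr => i _; apply: eq_bigr => j _.
by rewrite agree // -ltnS ltn_ord.
Qed.
End Ext.

Lemma inc_chain (R : realType) (k : nat) (xs : nat -> nat -> R) i :
  (forall j, (j <= k)%N -> xs i j < xs i j.+1) -> xs i 0 < xs i k.+1.
Proof.
move=> h; suff : forall j, (j <= k)%N -> xs i 0 < xs i j.+1 by apply.
elim=> [|j IH] hj; first exact: h.
by apply: lt_trans (IH (ltnW hj)) (h _ hj).
Qed.

Lemma size_deriv_le (R : realType) (p : {poly R}) k :
  (size p <= k.+1)%N -> (size p^`() <= k)%N.
Proof.
move=> /leq_sizeP hp; apply/leq_sizeP => j hj.
by rewrite coef_deriv hp ?mul0rn //.
Qed.
Unset Implicit Arguments.
Set Strict Implicit.
Theorem theorem3p12 (R : realType) (N k : nat) (xs A : nat -> nat -> R)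
  (beta tau : R) (s : nat) (c d : nat -> nat -> R)
  (g : nat -> R -> R) (u : nat -> nat -> {poly R}) :
  mesh N k xs ->
  assumptionS N k xs A ->
  0 < beta ->
  0 < tau ->
  (forall l, (l < s)%N -> \sum_(kap < l.+1) c l kap = 1) ->
  (forall kap, (kap < s)%N -> inL2 (a_of xs) (b_of N k xs) (g kap)) ->
  (forall kap, (kap <= s)%N -> inVk N k (u kap)) ->
  (forall l, (l < s)%N -> forall ws : nat -> nat -> R,
     l2Vk N k xs (u l.+1) ws =
     \sum_(kap < l.+1)
        (c l kap * l2Vk N k xs (u kap) ws
         + tau * d l kap * (flux_term N k beta xs (u kap) ws
                            + l2g N k xs (g kap) ws)))
  <->
  (forall l, (l < s)%N -> forall w : nat -> {poly R}, inVk N k w ->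
     ipStar N k xs A (u l.+1) w =
     \sum_(kap < l.+1)
        (c l kap * ipStar N k xs A (u kap) w
         + tau * d l kap * (Hstar N k beta xs A (u kap) w
                            + l2g N k xs (g kap) (Mstar k xs A w)))).
Proof.
move=> [N0 [hinc _]] [k1 hS] _ _ _ _ _.
have hab : forall i, (i < N)%N -> xs i 0 < xs i k.+1.
  by move=> i hi; apply: inc_chain => j hj; exact: hinc.
have hex : forall i, (i < N)%N -> forall p : {poly R}, (size p <= 2 * k)%N ->
    Ip (xs i 0) (xs i k.+1) p = Qi k xs A i p.
  move=> i hi p hp; have := (hS i hi).1 p hp.
  by rewrite Ip_integ ?hab // => /eqP; rewrite subr_eq0 => /eqP.
have fluxH : forall v w, inVk N k w ->
    flux_term N k beta xs v (Mstar k xs A w) = Hstar N k beta xs A v w.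
  move=> v w hw; apply: flux_H => // i hi; apply: hex => //.
  apply: leq_trans (size_deriv_le (hw i hi)) _; lia.
split.
- move=> H l hl w hw; rewrite /ipStar H //; apply: eq_bigr => kap _.
  by rewrite fluxH.
- move=> H l hl ws.
  case: k k1 hinc hS hab hex fluxH H => [|K] // k1 hinc hS hab hex fluxH H.
  set w := wsol K.+1 xs A ws.
  have inj : forall i, (i < N)%N -> forall p : {poly R}, (size p <= K.+2)%N ->
      (forall j, (j <= K.+1)%N -> Mc K.+1 xs A i p j = 0) -> p = 0.
    move=> i hi p hp hM; apply: (cell_inj (hab i hi) (hex i hi) (hS i hi).2 hp).
    exact: hM.
  have hw : inVk N K.+1 w by move=> i hi; exact: polyrow_size.
  have agree : forall i j, (i < N)%N -> (j <= K.+1)%N -> ws i j = Mstar K.+1 xs A w i j.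
    move=> i j hi hj; rewrite /Mstar Mcell_local wsol_spec //.
    exact: inj.
  have E1 : forall v, l2Vk N K.+1 xs v ws = ipStar N K.+1 xs A v w.
    by move=> v; rewrite /l2Vk /ipStar /l2Vk (pairStar_ext _ agree).
  have E2 : forall v, flux_term N K.+1 beta xs v ws = Hstar N K.+1 beta xs A v w.
    by move=> v; rewrite (flux_ext _ agree) fluxH.
  have E3 : forall gg, l2g N K.+1 xs gg ws = l2g N K.+1 xs gg (Mstar K.+1 xs A w).
    by move=> gg; rewrite /l2g (pairStar_ext _ agree).
  rewrite E1 (H l hl w hw); apply: eq_bigr => kap _.
  by rewrite E1 E2 E3.
Qed.
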